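(* Let $n\geqslant2$, $\lambda>0$, distinct points $p_1,\ldots,p_M\in\mathbb{Z}^n$ and positive integers $n_1,\ldots,n_M$ be given, and let $g=4\pi\sum_{j=1}^Mn_j\delta_{p_j}$. Let $\Omega_0\subset\mathbb{Z}^n$ be a finite set containing $\{p_j\}_{j=1}^M$ and let $\Omega$ be a finite connected subset with $\Omega_0\subset\Omega$. Fix $K>2\lambda$, let $u_0=0$ and for $k\geqslant1$ let $u_k:\overline\Omega\to\mathbb{R}$ be the (unique) solution of $$(\Delta-K)u_k=\lambda e^{u_{k-1}}(e^{u_{k-1}}-1)+g-Ku_{k-1}\ \text{ on }\Omega,\qquad u_k=0\ \text{ on }\delta\Omega.$$ Then there exists a real-valued function $u_\Omega$ on $\overline\Omega$ such that $u_k\to u_\Omega$ pointwise on $\overline\Omega$, and $u_\Omega$ satisfies $$\Delta u_\Omega=\lambda e^{u_\Omega}(e^{u_\Omega}-1)+g\ \text{ on }\Omega,\qquad u_\Omega=0\ \text{ on }\delta\Omega.$$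
   Context: $\mathbb{Z}^n$ is the integer lattice graph with $x\sim y$ iff $\sum_i|x_i-y_i|=1$. For a finite $\Omega\subset\mathbb{Z}^n$, $\delta\Omega=\{y\in\mathbb{Z}^n\setminus\Omega:\exists x\in\Omega,\ y\sim x\}$ and $\overline\Omega=\Omega\cup\delta\Omega$. For $u:\overline\Omega\to\mathbb{R}$ and $x\in\Omega$, $\Delta u(x)=\sum_{y\sim x}(u(y)-u(x))$. $\delta_p$ is the function equal to $1$ at $p$ and $0$ elsewhere. *)

(* Defs.v *)
From HB Require Import structures.
From mathcomp Require Import all_boot all_order all_algebra.
From mathcomp Require Import all_classical all_reals all_analysis.
From mathcomp Require Import Rstruct Rstruct_topology.
From Stdlib Require Import Rdefinitions.
Set Implicit Arguments. Unset Strict Implicit. Unset Printing Implicit Defensive.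
Import Order.TTheory GRing.Theory Num.Theory.
Local Open Scope ring_scope.

Definition pt (n : nat) := {ffun 'I_n -> int}.

Definition adj (n : nat) (x y : pt n) : bool :=
  ((\sum_(i < n) `|x i - y i|)%N == 1%N).

Definition shift (n : nat) (x : pt n) (i : 'I_n) (s : int) : pt n :=
  [ffun j => x j + (if j == i then s else 0)].

Definition nbrs (n : nat) (x : pt n) : seq (pt n) :=
  [seq shift x i 1 | i <- enum 'I_n] ++ [seq shift x i (-1) | i <- enum 'I_n].

Definition lap (n : nat) (u : pt n -> R) (x : pt n) : R :=
  \sum_(y <- nbrs x) (u y - u x).

Definition bdry (n : nat) (Om : seq (pt n)) (y : pt n) : Prop :=
  y \notin Om /\ exists x, x \in Om /\ adj x y.

Definition clos (n : nat) (Om : seq (pt n)) (y : pt n) : Prop :=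
  y \in Om \/ bdry Om y.

Definition connectedZ (n : nat) (Om : seq (pt n)) : Prop :=
  forall x y, x \in Om -> y \in Om ->
    exists s : seq (pt n), [/\ path (@adj n) x s, last x s = y & all (fun z => z \in Om) s].

Definition gsrc (n M : nat) (p : 'I_M -> pt n) (nn : 'I_M -> nat) (x : pt n) : R :=
  4 * pi * \sum_(j < M) (nn j)%:R * (if x == p j then 1 else 0).

(* Main.v *)
Require Import Defs.
From HB Require Import structures.
From mathcomp Require Import all_boot all_order all_algebra.
From mathcomp Require Import all_classical all_reals all_analysis.
From mathcomp Require Import Rstruct Rstruct_topology.
From Stdlib Require Import Rdefinitions.
From mathcomp Require Import ring lra zify.
From Stdlib Require RIneq.
Import Order.TTheory GRing.Theory Num.Theory.
Local Open Scope classical_set_scope.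
Local Open Scope ring_scope.

Lemma shift_adj (n : nat) (x : pt n) (i : 'I_n) (s : int) : (s = 1 \/ s = -1) -> adj x (Defs.shift x i s).
Proof.
move=> hs; rewrite /adj (bigD1 i) //= big1 => [|j hj]; rewrite ?ffunE.
  by rewrite eqxx opprD addrA subrr add0r addr0; case: hs => ->.
by rewrite (negbTE hj) addr0 subrr.
Qed.

Lemma nbrs_adj (n : nat) (x y : pt n) : y \in nbrs x -> adj x y.
Proof.
rewrite /nbrs mem_cat => /orP[] /mapP [i _ ->]; apply: shift_adj; by [left|right].
Qed.

Lemma lapB (n : nat) (f g : pt n -> R) x :
  lap (fun y => f y - g y) x = lap f x - lap g x.
Proof. rewrite /lap -sumrB; apply: eq_bigr => y _; ring. Qed.

Lemma seq_argmax (T : eqType) (v : T -> R) (s : seq T) x0 : x0 \in s ->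
  exists2 m, m \in s & forall y, y \in s -> v y <= v m.
Proof.
elim: s x0 => // a s IH x0 _.
have [hs|hs] := boolP (has (fun _ => true) s).
  case/hasP: hs => b bs _; case: (IH b bs) => m ms hm.
  case: (lerP (v a) (v m)) => h.
    exists m; first by rewrite inE ms orbT.
    by move=> y; rewrite inE => /orP[/eqP->|/hm].
  exists a; first by rewrite inE eqxx.
  move=> y; rewrite inE => /orP[/eqP->//|/hm]; lra.
exists a; first by rewrite inE eqxx.
move=> y; rewrite inE => /orP[/eqP->//|ys].
by case/hasP: hs; exists y.
Qed.

Lemma maxpr (n : nat) (Om : seq (pt n)) (K : R) (v : pt n -> R) : 0 < K ->
  (forall x, x \in Om -> K * v x <= lap v x) ->
  (forall x, bdry Om x -> v x <= 0) -> forall x, x \in Om -> v x <= 0.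
Proof.
move=> K0 hL hB x xO; rewrite leNgt; apply/negP => vx.
case: (@seq_argmax _ v _ _ xO) => m mO hm.
have vm : 0 < v m by move: (hm x xO); lra.
have : lap v m <= 0.
  rewrite /lap big_seq; apply: sumr_le0 => y /nbrs_adj ay.
  have [yO|yO] := boolP (y \in Om).
    by move: (hm y yO); lra.
  have : v y <= 0 by apply: hB; split => //; exists m.
  lra.
move: (hL m mO); have : 0 < K * v m by apply: mulr_gt0.
lra.
Qed.

Lemma Fdec (lam K a b : R) : 0 < lam -> 2*lam < K -> a <= b -> b <= 0 ->
  lam * expR b * (expR b - 1) - K * b <= lam * expR a * (expR a - 1) - K * a.
Proof.
move=> l0 lK ab b0.
have eab : expR a <= expR b by rewrite ler_expR.
have eb1 : expR b <= 1 by rewrite expR_le1.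
have eb0 : 0 < expR b := expR_gt0 b.
have ea : expR a = expR (a - b) * expR b. rewrite -exp.expRD; congr expR; ring.
have t2 : 1 + ((a - b) + (a - b)) <= expR (a - b) * expR (a - b).
  by rewrite -exp.expRD; apply: expR_ge1Dx.
set t := expR (a - b) in ea t2.
set eb := expR b in eab eb1 eb0 ea *.
have h1 : eb * eb * (1 - t * t) <= eb * eb * (2 * (b - a)).
  apply: ler_wpM2l; [nra|lra].
have h2 : eb * eb * (2 * (b - a)) <= 2 * (b - a).
  rewrite -[X in _ <= X]mul1r; apply: ler_wpM2r; nra.
have h3 : eb * eb - expR a * expR a - (eb - expR a) <= 2 * (b - a).
  rewrite ea; nra.
have h4 : lam * (eb * eb - expR a * expR a - (eb - expR a)) <= lam * (2 * (b - a)).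
  by apply: ler_wpM2l; lra.
have h5 : lam * (2 * (b - a)) <= K * (b - a) by nra.
nra.
Qed.

Lemma negF (lam w : R) : 0 < lam -> w <= 0 -> lam * expR w * (expR w - 1) <= 0.
Proof.
move=> l0 w0; have := expR_gt0 w; have : expR w <= 1 by rewrite expR_le1.
move=> h1 h2; rewrite -mulrA; apply: mulr_ge0_le0; first lra.
apply: mulr_ge0_le0; lra.
Qed.

Definition sqn (n : nat) (x : pt n) : R := \sum_(i < n) ((x i)%:~R) ^+ 2.
Arguments sqn {n}.

Lemma sqn_shift (n : nat) (x : pt n) (i : 'I_n) (s : int) :
  sqn (Defs.shift x i s) - sqn x = 2 * (x i)%:~R * s%:~R + s%:~R ^+ 2.
Proof.
rewrite /sqn -sumrB (bigD1 i) //= big1 => [|j hj]; rewrite ffunE.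
  by rewrite eqxx intrD; ring.
by rewrite (negbTE hj) addr0 subrr.
Qed.

Lemma sq_nbrs (n : nat) (x : pt n) :
  \sum_(y <- nbrs x) (sqn y - sqn x) = 2 * n%:R.
Proof.
rewrite /nbrs big_cat !big_map -enumT !big_enum /= -big_split /=.
under eq_bigr => i _ do rewrite !sqn_shift.
rewrite (eq_bigr (fun _ => 2)) => [|i _]; last by rewrite /= ?intrN; ring.
by rewrite sumr_const card_ord mulr_natr.
Qed.

Lemma lap_w (n : nat) (x : pt n) (G B : R) :
  lap (fun y => G * sqn y - B) x = G * (2 * n%:R).
Proof.
rewrite -(sq_nbrs n x) mulr_sumr /lap; apply: eq_bigr => y _ /=; ring.
Qed.

Definition sqb (n : nat) (z : pt n) : R := \sum_(i < n) (`|(z i)%:~R : R| + 1) ^+ 2.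
Arguments sqb {n}.

Lemma sqb_ge0 (n : nat) (z : pt n) : 0 <= sqb z.
Proof. by apply: sumr_ge0 => i _; apply: sqr_ge0. Qed.

Lemma term_le (n : nat) (Om : seq (pt n)) (z : pt n) : z \in Om ->
  sqb z <= \sum_(w <- Om) sqb w.
Proof.
move=> zO; rewrite (perm_big _ (perm_to_rem zO)) big_cons /=.
by rewrite lerDl; apply: sumr_ge0 => w _; exact: sqb_ge0.
Qed.

Lemma coord_le (a b : R) : `|a - b| <= 1 -> b ^+ 2 <= (`|a| + 1) ^+ 2.
Proof.
rewrite ler_norml => /andP[h1 h2].
have ha1 : a <= `|a| := ler_norm a.
have ha2 : - a <= `|a| by rewrite -normrN ler_norm.
have hb1 : b <= `|a| + 1 by lra.
have hb2 : - (`|a| + 1) <= b by lra.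
have hp : 0 <= (`|a| + 1 - b) * (`|a| + 1 + b) by apply: mulr_ge0; lra.
move: hp hb1 hb2; generalize `|a| => c; rewrite !expr2 => hp hb1 hb2.
nra.
Qed.

Lemma sqn_le_clos (n : nat) (Om : seq (pt n)) (y : pt n) : clos Om y ->
  sqn y <= \sum_(w <- Om) sqb w.
Proof.
case=> [yO|[_ [z [zO azy]]]].
  apply: (le_trans _ (term_le _ _ _ yO)); rewrite /sqn /sqb; apply: ler_sum => i _; apply: coord_le.
  by rewrite subrr normr0.
apply: (le_trans _ (term_le _ _ _ zO)); rewrite /sqn /sqb; apply: ler_sum => i _; apply: coord_le.
rewrite -intrB -intr_norm -[1]/(1%:~R) ler_int.
move: azy; rewrite /adj => /eqP hs.
rewrite -hs (bigD1 i) //=.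
rewrite lerDl; apply: sumr_ge0 => j _; exact: normr_ge0.
Qed.

Lemma cvB {f g : nat -> R} {a b : R} : f @ \oo --> a -> g @ \oo --> b -> (fun k => f k - g k) @ \oo --> a - b.
Proof. move=> h1 h2. have := @cvgB _ R^o _ _ _ f g a b h1 h2. exact. Qed.
Lemma cvD {f g : nat -> R} {a b : R} : f @ \oo --> a -> g @ \oo --> b -> (fun k => f k + g k) @ \oo --> a + b.
Proof. move=> h1 h2. have := @cvgD _ R^o _ _ _ f g a b h1 h2. exact. Qed.
Lemma cvM {f g : nat -> R} {a b : R} : f @ \oo --> a -> g @ \oo --> b -> (fun k => f k * g k) @ \oo --> a * b.
Proof. move=> h1 h2. have := @cvgM R _ _ _ f g a b h1 h2. exact. Qed.
Lemma cvexp {f : nat -> R} {a : R} : f @ \oo --> a -> (fun k => expR (f k)) @ \oo --> expR a.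
Proof. move=> h1. have := cvg_comp _ _ h1 (@continuous_expR _ a). exact. Qed.
Lemma cvcst (a : R) : (fun _ : nat => a) @ \oo --> a.
Proof. exact: cvg_cst. Qed.
Lemma cvS {f : nat -> R} {a : R} : f @ \oo --> a -> (fun k => f k.+1) @ \oo --> a.
Proof. move=> h. have e := cvg_shiftS f (nbhs a). rewrite -e in h. exact h. Qed.
Lemma cvU {f : nat -> R} {a b : R} : f @ \oo --> a -> f @ \oo --> b -> a = b.
Proof. move=> h1 h2. have := @cvg_unique R^o (@norm_hausdorff _ R^o) _ _ a b h1 h2. exact. Qed.
Lemma cvdec {f : nat -> R} {m : R} : (forall k, f k.+1 <= f k) -> (forall k, m <= f k) ->
  f @ \oo --> inf (range f).
Proof.
move=> hd hm; have := @nonincreasing_cvgn R f; apply.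
  move=> a b; elim: b => [|b IHb]; first by rewrite leqn0 => /eqP->.
  rewrite leq_eqVlt => /orP[/eqP->//|]; rewrite ltnS => /IHb.
  by move/(le_trans (hd b)).
by exists m => _ [k _ <-].
Qed.

Lemma lap_cvg (n : nat) (v : nat -> pt n -> R) (l : pt n -> R) (x : pt n) :
  (forall y, y \in nbrs x -> (fun k => v k y) @ \oo --> l y) ->
  (fun k => v k x) @ \oo --> l x ->
  (fun k => lap (v k) x) @ \oo --> lap l x.
Proof.
move=> hy hx; rewrite /lap; elim: (nbrs x) hy => [|a s IH] hy.
  under eq_fun do rewrite big_nil.
  rewrite big_nil; exact: cvcst.
under eq_fun do rewrite big_cons.
rewrite big_cons.
have h1 : (fun k => v k a - v k x) @ \oo --> l a - l x.
  have ha : a \in a :: s by rewrite inE eqxx.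
  exact: (cvB (hy a ha) hx).
have h2 := IH (fun y ys => hy y (ltac:(by rewrite inE ys orbT))).
exact: (cvD h1 h2).
Qed.

Theorem lemma3p2 (n M : nat) (lam K : R) (p : 'I_M -> pt n) (nn : 'I_M -> nat)
  (Om0 Om : seq (pt n)) (u : nat -> pt n -> R) :
  leq 2 n -> leq 1 M -> 0 < lam ->
  injective p -> (forall j, leq 1 (nn j)) ->
  (forall j, p j \in Om0) -> {subset Om0 <= Om} -> connectedZ Om ->
  2 * lam < K ->
  (forall x, clos Om x -> u 0%N x = 0) ->
  (forall k x, x \in Om ->
     lap (u k.+1) x - K * u k.+1 x
     = lam * expR (u k x) * (expR (u k x) - 1) + gsrc p nn x - K * u k x) ->
  (forall k x, bdry Om x -> u k.+1 x = 0) ->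
  exists uOm : pt n -> R,
    [/\ (forall x, clos Om x -> (fun k => u k x) @ \oo --> uOm x),
        (forall x, x \in Om ->
           lap uOm x = lam * expR (uOm x) * (expR (uOm x) - 1) + gsrc p nn x)
      & (forall x, bdry Om x -> uOm x = 0)].
Proof.
move=> n2 M1 l0 pinj nn1 pO0 sub conn lK u0 rec bd.
have K0 : 0 < K by lra.
pose G : R := 4 * (pi : R) * \sum_(j < M) (nn j)%:R.
have h4 : 0 <= IZR 4 by apply/RleP; apply: (RIneq.IZR_le 0 4).
have pi0 : 0 <= (4 : R) * (pi : R).
  by apply: mulr_ge0; [exact: h4 | apply: ltW; exact: pi_gt0].
have G0 : 0 <= G.
  apply: mulr_ge0; first exact: pi0.
  by apply: sumr_ge0 => j _; apply: ler0n.
have gG : forall x, gsrc p nn x <= G.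
  move=> x; rewrite /gsrc /G; apply: ler_wpM2l; first exact: pi0.
  apply: ler_sum => j _; case: (x == p j); rewrite ?mulr1 ?mulr0 //.
have g0 : forall x, 0 <= gsrc p nn x.
  move=> x; rewrite /gsrc; apply: mulr_ge0; first exact: pi0.
  apply: sumr_ge0 => j _; case: (x == p j); rewrite ?mulr1 ?mulr0 //.
pose F := fun t : R => lam * expR t * (expR t - 1) - K * t.
have rec' : forall k x, x \in Om -> lap (u k.+1) x - K * u k.+1 x = F (u k x) + gsrc p nn x.
  by move=> k x xO; rewrite rec // /F; ring.
have clO : forall x, x \in Om -> clos Om x by move=> x xO; left.
have nOb : forall x, clos Om x -> x \notin Om -> bdry Om x.
  by move=> x [h|//] xO; rewrite h in xO.
have mono : forall k x, clos Om x -> u k.+1 x <= u k x /\ u k x <= 0.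
  elim=> [|k IH] x cx.
    rewrite u0 //; split => //.
    have [xO|xO] := boolP (x \in Om); last first.
      by rewrite bd //; apply: nOb.
    apply: (maxpr _ Om K (u 1%N) K0) => // [y yO|y /bd-> //].
    have hF : F (u 0%N y) = 0.
      rewrite /F (_ : expR (u 0%N y) = 1); last first.
        by rewrite u0; [exact: (exp.expR0 R) | exact: clO].
      by rewrite u0; [ring | exact: clO].
    have := rec' 0%N y yO; rewrite hF add0r.
    have := g0 y; lra.
  have [h1 h2] := IH x cx; split; last lra.
  have [xO|xO] := boolP (x \in Om); last first.
    by rewrite !bd //; apply: nOb.
  suff : u k.+2 x - u k.+1 x <= 0 by lra.
  apply: (maxpr _ Om K (fun y => u k.+2 y - u k.+1 y) K0) => // [y yO|y yb]; last first.
    by rewrite !bd // subrr.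
  rewrite lapB.
  have := rec' k.+1 y yO; have := rec' k y yO.
  have [h3 h5] := IH y (clO y yO).
  have := Fdec lam K (u k.+1 y) (u k y) l0 lK h3 h5.
  rewrite /F; lra.
pose B := G * \sum_(w <- Om) sqb w.
have wle0 : forall y, clos Om y -> G * sqn y - B <= 0.
  move=> y cy; rewrite subr_le0 /B; apply: ler_wpM2l => //.
  exact: sqn_le_clos.
have hn : 2 <= n%:R :> R by rewrite ler_nat.
have lowb : forall k x, clos Om x -> G * sqn x - B <= u k x.
  elim=> [|k IH] x cx; first by rewrite u0 //; apply: wle0.
  have [xO|xO] := boolP (x \in Om); last first.
    by rewrite !bd //; [apply: wle0 | apply: nOb].
  suff : G * sqn x - B - u k.+1 x <= 0 by lra.
  apply: (maxpr _ Om K (fun y => G * sqn y - B - u k.+1 y) K0) => // [y yO|y yb]; last first.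
    by rewrite !bd // subr0; apply: wle0; right.
  rewrite lapB lap_w.
  have := rec' k y yO.
  have hw := IH y (clO y yO).
  have [_ h6] := mono k y (clO y yO).
  have hw0 := wle0 y (clO y yO).
  move: hw hw0; set w := G * sqn y - B => hw hw0.
  have := Fdec lam K w (u k y) l0 lK hw h6.
  have := negF lam w l0 hw0.
  have := gG y.
  have : G <= G * (2 * n%:R) by rewrite -{1}[G]mulr1; apply: ler_wpM2l => //; lra.
  rewrite /F; lra.
pose uOm := fun x => inf (range (fun k => u k x)).
have hc : forall x, clos Om x -> (fun k => u k x) @ \oo --> uOm x.
  move=> x cx; apply: (cvdec (m := G * sqn x - B)) => k.
    exact: (mono k x cx).1.
  exact: lowb.
exists uOm; split => //.
- move=> x xO.
  have ha : (fun k => lap (u k.+1) x - K * u k.+1 x) @ \oo --> lap uOm x - K * uOm x.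
    have hs : forall y, clos Om y -> (fun k => u k.+1 y) @ \oo --> uOm y.
      by move=> y cy; exact: (@cvS (fun k => u k y) (uOm y) (hc y cy)).
    apply: cvB; first apply: lap_cvg.
    + move=> y ys; apply: hs.
      have [yO|yO] := boolP (y \in Om); first by left.
      by right; split => //; exists x; split => //; exact: nbrs_adj.
    + exact: hs (clO x xO).
    apply: cvM; first exact: cvcst.
    exact: hs (clO x xO).
  have hb : (fun k => lap (u k.+1) x - K * u k.+1 x) @ \oo --> F (uOm x) + gsrc p nn x.
    under eq_fun do rewrite rec' //.
    have he : (fun k => expR (u k x)) @ \oo --> expR (uOm x).
      exact: cvexp (hc x (clO x xO)).
    apply: cvD; last exact: cvcst.
    apply: cvB; last by apply: cvM; [exact: cvcst | exact: hc (clO x xO)].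
    apply: cvM; first by apply: cvM; [exact: cvcst | exact: he].
    by apply: cvB; [exact: he | exact: cvcst].
  have := cvU ha hb; rewrite /F; lra.
- move=> x xb.
  have cx : clos Om x by right.
  have e : (fun k => u k x) = fun _ => 0.
    by apply: funext => -[|k]; [exact: u0 | exact: bd].
  have := hc x cx; rewrite e => h.
  exact: (cvU h (cvcst 0)).
Qed.
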